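(* Let $L$ be an infinite set and let $Q$ be either the edgeless cube $Q_L$ or the edged cube $\bar Q_L$. The universally convergent basic sequences on $Q$ form a submonoid $\mathrm{uc}_L$ of the monoid $\mathrm{m}_L$ of all basic sequences under concatenation.
   Context: Let $L$ be an infinite set, $-L=\{-r:r\in L\}$ a disjoint copy of $L$, and $0$ a new element; $L^\dagger=-L\cup\{0\}\cup L$ with $-(-r)=r$, $-0=0$. Adjoin $\pm\infty$ with $-(+\infty)=-\infty$ and set $\bar L^\dagger=L^\dagger\cup\{\pm\infty\}$. Points of $U=(\bar L^\dagger)^3$ have coordinates $x,y,z$. The edgeless cube $Q_L$ is the set of points of $U$ with exactly one coordinate in $\{\pm\infty\}$ (cells). The edged cube $\bar Q_L$ is the set of cells $(p,i)$ with $p\in U$, $i\in\{x,y,z\}$, $p_i\in\{\pm\infty\}$ ($i$ marks the face). For $i\in\{x,y,z\}$, $\alpha\in\bar L^\dagger$, the quarter-turn twist $T_{i,\alpha}$ is the permutation of cells fixing every cell whose point $p$ has $p_i\ne\alpha$ and acting on the others by $T_{x,\alpha}(\alpha,y,z)=(\alpha,-z,y)$, $T_{y,\alpha}(x,\alpha,z)=(z,\alpha,-x)$, $T_{z,\alpha}(x,y,\alpha)=(-y,x,\alpha)$ (in $\bar Q_L$ the marked coordinate is carried along by the rotation). Basic twists are $T,T^2,T^3$ for quarter-turn twists $T$. A basic sequence is a sequence $\langle\sigma_\eta:\eta<\theta\rangle$ of basic twists of ordinal length $\theta$; $\mathrm{m}_L$ is the monoid of all basic sequences under concatenation, with identity the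 empty sequence. A labelling is a map $f$ from cells to $X\cup\{\mathrm{NaC}\}$ for a set $X\not\ni\mathrm{NaC}$; it is legal if it never takes value NaC. A twist $\sigma$ acts by $(\sigma f)(c)=f(\sigma^{-1}c)$. Applying $\langle\sigma_\eta:\eta<\theta\rangle$ to $f_0$ produces $f_{\eta+1}=\sigma_\eta f_\eta$, and for limit $\lambda\le\theta$, $f_\lambda(c)$ is the eventually constant value of $f_\eta(c)$ ($\eta<\lambda$) if it exists and NaC otherwise; $f_\theta$ is the terminal labelling. The sequence is universally convergent if, applied to the identity labelling (each cell labelled by itself), its terminal labelling is legal. *)

(* Defs.v *)
From Stdlib Require Import List ClassicalEpsilon.
Set Implicit Arguments.

Definition infinite_type (L : Type) : Prop :=
  forall l : list L, exists x : L, ~ In x l.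

Inductive Ldag (L : Type) : Type := LNeg (r : L) | LZero | LPos (r : L).
Arguments LNeg {L} r. Arguments LZero {L}. Arguments LPos {L} r.

Definition ldneg {L} (a : Ldag L) : Ldag L :=
  match a with LNeg r => LPos r | LZero => LZero | LPos r => LNeg r end.

Inductive Lbar (L : Type) : Type := LFin (a : Ldag L) | LPInf | LMInf.
Arguments LFin {L} a. Arguments LPInf {L}. Arguments LMInf {L}.

Definition lbneg {L} (v : Lbar L) : Lbar L :=
  match v with LFin a => LFin (ldneg a) | LPInf => LMInf | LMInf => LPInf end.

Definition is_inf {L} (v : Lbar L) : bool :=
  match v with LFin _ => false | _ => true end.

Lemma is_inf_neg {L} (v : Lbar L) : is_inf (lbneg v) = is_inf v.
Proof. destruct v; reflexivity. Qed.

Inductive axis : Type := AX | AY | AZ.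

Definition point (L : Type) : Type := (Lbar L * Lbar L * Lbar L)%type.

Definition coord {L} (p : point L) (i : axis) : Lbar L :=
  match p with (x, y, z) => match i with AX => x | AY => y | AZ => z end end.

Definition rot_pt {L} (i : axis) (p : point L) : point L :=
  match p with (x, y, z) =>
    match i with
    | AX => (x, lbneg z, y)
    | AY => (z, y, lbneg x)
    | AZ => (lbneg y, x, z)
    end end.

(* where the coordinate j is carried by the rotation about axis i *)
Definition rot_axis (i j : axis) : axis :=
  match i, j with
  | AX, AY => AZ | AX, AZ => AY
  | AY, AX => AZ | AY, AZ => AX
  | AZ, AX => AY | AZ, AY => AX
  | _, _ => j
  end.

Definition at_layer {L} (i : axis) (alpha : Lbar L) (p : point L) : bool :=
  if excluded_middle_informative (coord p i = alpha) then true else false.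

Definition qturn_pt {L} (i : axis) (alpha : Lbar L) (p : point L) : point L :=
  if at_layer i alpha p then rot_pt i p else p.

(** * Edgeless cube Q_L: points with exactly one infinite coordinate *)
Definition b2n (b : bool) : nat := if b then 1 else 0.

Definition edgeless_cellb {L} (p : point L) : bool :=
  match p with (x, y, z) =>
    Nat.eqb (b2n (is_inf x) + b2n (is_inf y) + b2n (is_inf z)) 1
  end.

Lemma rot_pt_edgeless {L} (i : axis) (p : point L) :
  edgeless_cellb (rot_pt i p) = edgeless_cellb p.
Proof.
  destruct p as [[x y] z]; destruct i; simpl; rewrite ?is_inf_neg;
  destruct (is_inf x), (is_inf y), (is_inf z); reflexivity.
Qed.

Lemma qturn_pt_edgeless {L} (i : axis) (alpha : Lbar L) (p : point L) :
  edgeless_cellb p = true -> edgeless_cellb (qturn_pt i alpha p) = true.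
Proof.
  intro H; unfold qturn_pt; destruct (at_layer i alpha p);
  [rewrite rot_pt_edgeless|]; exact H.
Qed.

Definition ecell (L : Type) : Type := { p : point L | edgeless_cellb p = true }.

Definition qturn_ecell {L} (i : axis) (alpha : Lbar L) (c : ecell L) : ecell L :=
  exist _ (qturn_pt i alpha (proj1_sig c))
          (@qturn_pt_edgeless L i alpha (proj1_sig c) (proj2_sig c)).

(** * Edged cube bar Q_L: pairs (p, i) with p_i infinite *)

Lemma rot_coord_inf {L} (i j : axis) (p : point L) :
  is_inf (coord (rot_pt i p) (rot_axis i j)) = is_inf (coord p j).
Proof.
  destruct p as [[x y] z]; destruct i, j; simpl; rewrite ?is_inf_neg; reflexivity.
Qed.

Definition qturn_dpt {L} (i : axis) (alpha : Lbar L) (c : point L * axis)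
  : point L * axis :=
  if at_layer i alpha (fst c) then (rot_pt i (fst c), rot_axis i (snd c)) else c.

Lemma qturn_dpt_cell {L} (i : axis) (alpha : Lbar L) (c : point L * axis) :
  is_inf (coord (fst c) (snd c)) = true ->
  is_inf (coord (fst (qturn_dpt i alpha c)) (snd (qturn_dpt i alpha c))) = true.
Proof.
  intro H; unfold qturn_dpt; destruct (at_layer i alpha (fst c)); simpl;
  [rewrite rot_coord_inf|]; exact H.
Qed.

Definition dcell (L : Type) : Type :=
  { c : point L * axis | is_inf (coord (fst c) (snd c)) = true }.

Definition qturn_dcell {L} (i : axis) (alpha : Lbar L) (c : dcell L) : dcell L :=
  exist _ (qturn_dpt i alpha (proj1_sig c)) (@qturn_dpt_cell L i alpha (proj1_sig c) (proj2_sig c)).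

Inductive pow3 : Type := Pow1 | Pow2 | Pow3.
Definition pow3_nat (k : pow3) : nat := match k with Pow1 => 1 | Pow2 => 2 | Pow3 => 3 end.

Record basic_twist (L : Type) : Type :=
  BasicTwist { bt_axis : axis; bt_pos : Lbar L; bt_pow : pow3 }.

Definition act_twist {L C : Type} (qt : axis -> Lbar L -> C -> C)
  (s : basic_twist L) (c : C) : C :=
  Nat.iter (pow3_nat (bt_pow s)) (qt (bt_axis s) (bt_pos s)) c.

Record wellorder : Type := WellOrder {
  wo_car :> Type;
  wo_lt : wo_car -> wo_car -> Prop;
  wo_trans : forall a b c, wo_lt a b -> wo_lt b c -> wo_lt a c;
  wo_total : forall a b, wo_lt a b \/ a = b \/ wo_lt b a;
  wo_wf : well_founded wo_lt }.

(* a basic sequence <sigma_eta : eta < theta>, theta = order type of the index *)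
Record basic_seq (L : Type) : Type :=
  BasicSeq { bs_idx : wellorder; bs_tw : bs_idx -> basic_twist L }.

Definition empty_wo : wellorder.
Proof.
  refine (@WellOrder Empty_set (fun _ _ => False) _ _ _).
  - intros a; destruct a.
  - intros a; destruct a.
  - intros a; destruct a.
Defined.

Definition empty_seq (L : Type) : basic_seq L :=
  @BasicSeq L empty_wo (fun e => match e with end).

Definition sum_lt (I J : wellorder) (a b : I + J) : Prop :=
  match a, b with
  | inl x, inl y => wo_lt I x y
  | inl _, inr _ => True
  | inr _, inl _ => False
  | inr x, inr y => wo_lt J x y
  end.

Lemma sum_lt_wf (I J : wellorder) : well_founded (sum_lt I J).
Proof.
  assert (HI : forall x : I, Acc (sum_lt I J) (inl x)).
  { intro x; induction (wo_wf I x) as [x _ IH].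
    constructor; intros [y|y] Hy; simpl in Hy; [apply IH; exact Hy|destruct Hy]. }
  intros [x|y]; [apply HI|].
  induction (wo_wf J y) as [y _ IH].
  constructor; intros [x|x] Hx; simpl in Hx; [apply HI|apply IH; exact Hx].
Qed.

Definition sum_wo (I J : wellorder) : wellorder.
Proof.
  refine (@WellOrder (I + J)%type (sum_lt I J) _ _ (sum_lt_wf I J)).
  - intros [a|a] [b|b] [c|c]; simpl; try tauto; apply wo_trans.
  - intros [a|a] [b|b]; simpl; auto.
    + destruct (wo_total I a b) as [H|[H|H]]; subst; auto.
    + destruct (wo_total J a b) as [H|[H|H]]; subst; auto.
Defined.

Definition concat_seq {L} (s t : basic_seq L) : basic_seq L :=
  @BasicSeq L (sum_wo (bs_idx s) (bs_idx t))
    (fun e => match e with inl x => bs_tw s x | inr y => bs_tw t y end).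

(* stages eta <= theta: Some i = stage i < theta, None = stage theta *)
Definition stage (I : wellorder) : Type := option I.

Definition stage_lt {I : wellorder} (s t : stage I) : Prop :=
  match s, t with
  | Some a, Some b => wo_lt I a b
  | Some _, None => True
  | None, _ => False
  end.

Definition stage_le {I : wellorder} (s t : stage I) : Prop := s = t \/ stage_lt s t.

Definition is_succ {I : wellorder} (s t : stage I) : Prop :=
  stage_lt s t /\ forall u, stage_lt s u -> stage_le t u.

Definition is_limit {I : wellorder} (t : stage I) : Prop :=
  (exists s, stage_lt s t) /\ forall i : I, ~ is_succ (Some i) t.

(* labellings with values in X u {NaC}; None plays the role of NaC *)
Definition labelling (C X : Type) : Type := C -> option X.

Definition eventually_const {I : wellorder} {C X : Type}
  (F : stage I -> labelling C X) (t : stage I) (c : C) (v : option X) : Prop :=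
  exists s, stage_lt s t /\ forall u, stage_le s u -> stage_lt u t -> F u c = v.

(* The successor clause f_{eta+1} = sigma_eta f_eta, i.e.
   f_{eta+1}(c) = f_eta(sigma_eta^{-1} c), is written as
   f_{eta+1}(sigma_eta d) = f_eta(d) for all cells d. *)
Definition is_run {L C X : Type} (qt : axis -> Lbar L -> C -> C)
  (s : basic_seq L) (f0 : labelling C X)
  (F : stage (bs_idx s) -> labelling C X) : Prop :=
  (forall t, (forall u, ~ stage_lt u t) -> F t = f0) /\
  (forall (i : bs_idx s) (t : stage (bs_idx s)), is_succ (Some i) t ->
     forall d : C, F t (act_twist qt (bs_tw s i) d) = F (Some i) d) /\
  (forall t, is_limit t -> forall c : C,
     (forall v, eventually_const F t c v -> F t c = v) /\
     ((~ exists v, eventually_const F t c v) -> F t c = None)).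

Definition legal {C X : Type} (f : labelling C X) : Prop := forall c, f c <> None.

Definition univ_convergent {L C : Type} (qt : axis -> Lbar L -> C -> C)
  (s : basic_seq L) : Prop :=
  exists F : stage (bs_idx s) -> labelling C C,
    is_run qt s (fun c => Some c) F /\ legal (F None).

Definition uc_submonoid {L C : Type} (qt : axis -> Lbar L -> C -> C) : Prop :=
  univ_convergent qt (empty_seq L) /\
  forall s t : basic_seq L,
    univ_convergent qt s -> univ_convergent qt t ->
    univ_convergent qt (concat_seq s t).

(* Main.v *)
Require Import Defs.
From Stdlib Require Import List Classical ClassicalEpsilon Eqdep_dec Bool.

Section Stages.
Context {I : wellorder}.

Lemma wo_irrefl (x : I) : ~ wo_lt I x x.
Proof. intro H. induction (wo_wf I x) as [x _ IH]. exact (IH x H H). Qed.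

Lemma slt_irrefl (u : stage I) : ~ stage_lt u u.
Proof. destruct u; simpl; [apply wo_irrefl| tauto]. Qed.

Lemma slt_trans (u v w : stage I) : stage_lt u v -> stage_lt v w -> stage_lt u w.
Proof. destruct u, v, w; simpl; try tauto; apply wo_trans. Qed.

Lemma slt_total (u v : stage I) : stage_lt u v \/ u = v \/ stage_lt v u.
Proof. destruct u as [a|], v as [b|]; simpl; auto.
  destruct (wo_total I a b) as [H|[H|H]]; subst; auto. Qed.

Lemma slt_wf : well_founded (@stage_lt I).
Proof.
  assert (HS : forall x : I, Acc (@stage_lt I) (Some x)).
  { intro x; induction (wo_wf I x) as [x _ IH]. constructor; intros [y|] Hy; simpl in Hy;
    [apply IH; exact Hy | destruct Hy]. }
  intros [x|]; [apply HS|]. constructor; intros [y|] Hy; [apply HS| destruct Hy].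
Qed.

Lemma sle_not_lt (u v : stage I) : stage_le u v -> ~ stage_lt v u.
Proof. intros [E|E] H; [subst; exact (slt_irrefl _ H)| exact (slt_irrefl u (slt_trans _ _ _ E H))]. Qed.

Lemma not_lt_le (u v : stage I) : ~ stage_lt v u -> stage_le u v.
Proof. intro H. destruct (slt_total u v) as [E|[E|E]]; [right; exact E| left; exact E| contradiction]. Qed.

Lemma sle_trans (u v w : stage I) : stage_le u v -> stage_le v w -> stage_le u w.
Proof. intros [E|E] [F|F]; subst; [left; reflexivity|right; exact F|right; exact E|right; exact (slt_trans _ _ _ E F)]. Qed.

Lemma classify (t : stage I) :
  (forall u, ~ stage_lt u t) \/ (exists i, is_succ (Some i) t) \/ is_limit t.
Proof.
  destruct (classic (exists u, stage_lt u t)) as [H|H].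
  - destruct (classic (exists i, is_succ (Some i) t)) as [H2|H2]; [right; left; exact H2|].
    right; right; split; [exact H|]. intros i Hi; apply H2; exists i; exact Hi.
  - left; intros u Hu; apply H; exists u; exact Hu.
Qed.
End Stages.
Arguments slt_trans {I u v w}.
Arguments slt_irrefl {I}.
Arguments sle_not_lt {I u v}.
Arguments sle_trans {I u v w}.

Lemma iter_surj {C} (f : C -> C) (Hf : forall c, exists d, f d = c) n c :
  exists d, Nat.iter n f d = c.
Proof. revert c; induction n as [|n IH]; intro c; simpl.
 - exists c; reflexivity.
 - destruct (Hf c) as [e He]; destruct (IH e) as [d Hd]; exists d; rewrite Hd; exact He. Qed.

Lemma run_inj {L C : Type} (qt : axis -> Lbar L -> C -> C)
  (surj : forall i a (c : C), exists d, qt i a d = c)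
  (s : basic_seq L) (F : stage (bs_idx s) -> labelling C C) :
  is_run qt s (fun c => Some c) F ->
  forall t c1 c2 v, F t c1 = Some v -> F t c2 = Some v -> c1 = c2.
Proof.
  intros [H0 [HS HL]] t. induction (slt_wf t) as [t _ IH].
  intros c1 c2 v E1 E2.
  destruct (classify t) as [Hi|[[i Hi]|Hl]].
  - rewrite (H0 t Hi) in E1, E2. congruence.
  - unfold act_twist in HS.
    destruct (iter_surj _ (surj (bt_axis (bs_tw s i)) (bt_pos (bs_tw s i))) (pow3_nat (bt_pow (bs_tw s i))) c1) as [d1 D1].
    destruct (iter_surj _ (surj (bt_axis (bs_tw s i)) (bt_pos (bs_tw s i))) (pow3_nat (bt_pow (bs_tw s i))) c2) as [d2 D2].
    rewrite <- D1 in E1. rewrite <- D2 in E2.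
    rewrite (HS i t Hi) in E1, E2.
    assert (d1 = d2) by exact (IH (Some i) (proj1 Hi) d1 d2 v E1 E2).
    subst; reflexivity.
  - assert (Ev : forall c, F t c = Some v -> exists s0, stage_lt s0 t /\
       forall u, stage_le s0 u -> stage_lt u t -> F u c = Some v).
    { intros c E. destruct (HL t Hl c) as [A B].
      destruct (classic (exists w, eventually_const F t c w)) as [[w Hw]|N].
      - rewrite (A w Hw) in E. subst w. exact Hw.
      - rewrite (B N) in E; discriminate. }
    destruct (Ev c1 E1) as [s1 [L1 P1]], (Ev c2 E2) as [s2 [L2 P2]].
    destruct (slt_total s1 s2) as [H|[H|H]].
    + apply (IH s2 L2 c1 c2 v); [apply P1; [right; exact H| exact L2] | apply P2; [left; reflexivity | exact L2]].
    + subst. apply (IH s2 L2 c1 c2 v); [apply P1| apply P2]; auto; left; reflexivity.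
    + apply (IH s1 L1 c1 c2 v); [apply P1; [left; reflexivity| exact L1] | apply P2; [right; exact H | exact L1]].
Qed.

Lemma transport {L C X Y : Type} (qt : axis -> Lbar L -> C -> C) {A B : wellorder}
  (twA : A -> basic_twist L) (twB : B -> basic_twist L) (emb : A -> B)
  (phi : stage A -> stage B) (H : stage A -> labelling C X) (G : stage B -> labelling C Y)
  (beta : option X -> option Y) (t : stage A) :
  (forall i, phi (Some i) = Some (emb i)) ->
  (forall u v, stage_le u t -> stage_le v t -> (stage_lt u v <-> stage_lt (phi u) (phi v))) ->
  (forall w, stage_lt w (phi t) -> (exists u, stage_lt u t /\ phi u = w) \/
       ((exists u, stage_lt u t) /\ forall u, stage_lt u t -> stage_lt w (phi u))) ->
  (forall i, twB (emb i) = twA i) ->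
  (forall u, stage_le u t -> forall c, G (phi u) c = beta (H u c)) ->
  (forall a b, beta a = beta b -> a = b) ->
  beta None = None ->
  (forall i, is_succ (Some i) t -> forall d, H t (act_twist qt (twA i) d) = H (Some i) d) ->
  (is_limit t -> forall c, (forall v, eventually_const H t c v -> H t c = v) /\
       ((~ exists v, eventually_const H t c v) -> H t c = None)) ->
  (forall k, is_succ (Some k) (phi t) -> forall d, G (phi t) (act_twist qt (twB k) d) = G (Some k) d) /\
  (is_limit (phi t) -> forall c, (forall w, eventually_const G (phi t) c w -> G (phi t) c = w) /\
       ((~ exists w, eventually_const G (phi t) c w) -> G (phi t) c = None)).
Proof.
  intros Hphi Hemb Hcov Htw HGH Hinj Hb0 HHs HHl.
  assert (Hphi_lt : forall u, stage_lt u t -> stage_lt (phi u) (phi t)).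
  { intros u Hu; apply (Hemb u t (or_intror Hu) (or_introl eq_refl)); exact Hu. }
  split.
  - intros k [Hlt Hmin] d.
    destruct (Hcov _ Hlt) as [[u [Hu Eu]] | [[u0 Hu0] Hall]].
    + destruct u as [i|]; [| simpl in Hu; contradiction].
      rewrite Hphi in Eu; injection Eu as Ek; subst k.
      assert (Hsi : is_succ (Some i) t).
      { split; [exact Hu|]. intros v Hv.
        destruct (slt_total v t) as [Hvt|[Hvt|Hvt]]; [exfalso| left; symmetry; exact Hvt| right; exact Hvt].
        assert (H1 : stage_lt (phi (Some i)) (phi v))
          by (apply (Hemb (Some i) v (or_intror Hu) (or_intror Hvt)); exact Hv).
        rewrite Hphi in H1.
        exact (sle_not_lt (Hmin _ H1) (Hphi_lt v Hvt)). }
      rewrite Htw, (HGH t (or_introl eq_refl)), (HHs i Hsi d).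
      rewrite <- (HGH (Some i) (or_intror Hu) d), Hphi. reflexivity.
    + exfalso. exact (sle_not_lt (Hmin _ (Hall u0 Hu0)) (Hphi_lt u0 Hu0)).
  - intros Hl c.
    assert (Htl : is_limit t).
    { destruct Hl as [[w Hw] Hns]. split.
      - destruct (Hcov w Hw) as [[u [Hu _]]|[[u Hu] _]]; exists u; exact Hu.
      - intros i Hi. apply (Hns (emb i)). destruct Hi as [Hit Hmin]. split.
        + rewrite <- Hphi. apply Hphi_lt; exact Hit.
        + intros w' Hw'. destruct (slt_total w' (phi t)) as [E|[E|E]];
            [exfalso| left; symmetry; exact E | right; exact E].
          destruct (Hcov w' E) as [[u [Hu Eu]]|[_ Hall]].
          * subst w'. rewrite <- Hphi in Hw'.
            apply (Hemb (Some i) u (or_intror Hit) (or_intror Hu)) in Hw'.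
            exact (sle_not_lt (Hmin u Hw') Hu).
          * specialize (Hall (Some i) Hit). rewrite Hphi in Hall.
            exact (slt_irrefl _ (slt_trans Hw' Hall)). }
    destruct (HHl Htl c) as [HA HB].
    assert (EG : forall w, eventually_const G (phi t) c w -> exists v, w = beta v /\ eventually_const H t c v).
    { intros w [w0 [Hw0 P]].
      assert (Hu0 : exists u0, stage_lt u0 t /\ stage_le w0 (phi u0)).
      { destruct (Hcov w0 Hw0) as [[u [Hu Eu]]|[[u Hu] Hall]]; exists u; split; auto;
          [left; symmetry; exact Eu | right; apply Hall; exact Hu]. }
      destruct Hu0 as [u0 [Hu0 Hle0]].
      assert (Gu0 : G (phi u0) c = w) by (apply P; [exact Hle0 | apply Hphi_lt; exact Hu0]).
      exists (H u0 c). split.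
      - rewrite <- Gu0. apply HGH. right; exact Hu0.
      - exists u0. split; [exact Hu0|]. intros u Hle Hu. apply Hinj.
        rewrite <- (HGH u (or_intror Hu) c), <- (HGH u0 (or_intror Hu0) c), Gu0.
        apply P; [|apply Hphi_lt; exact Hu].
        apply (sle_trans Hle0). destruct Hle as [E|E]; [left; rewrite E; reflexivity|right].
        apply (Hemb u0 u (or_intror Hu0) (or_intror Hu)); exact E. }
    assert (EH : forall v, eventually_const H t c v -> eventually_const G (phi t) c (beta v)).
    { intros v [s0 [Hs0 P]]. exists (phi s0). split; [apply Hphi_lt; exact Hs0|].
      intros x Hx1 Hx2. destruct (Hcov x Hx2) as [[u [Hu Eu]]|[_ Hall]].
      - subst x. rewrite (HGH u (or_intror Hu) c). f_equal. apply P; [|exact Hu].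
        apply not_lt_le; intro Hus.
        apply (Hemb u s0 (or_intror Hu) (or_intror Hs0)) in Hus.
        exact (sle_not_lt Hx1 Hus).
      - exfalso. exact (sle_not_lt Hx1 (Hall s0 Hs0)). }
    split.
    + intros w Hw. destruct (EG w Hw) as [v [-> Hv]].
      rewrite (HGH t (or_introl eq_refl)), (HA v Hv). reflexivity.
    + intros N. rewrite (HGH t (or_introl eq_refl)), HB; [exact Hb0|].
      intros [v Hv]. apply N. exists (beta v). apply EH; exact Hv.
Qed.

Lemma uc_generic {L C : Type} (qt : axis -> Lbar L -> C -> C)
  (surj : forall i a (c : C), exists d, qt i a d = c) : uc_submonoid qt.
Proof.
  split.
  - exists (fun _ c => Some c). split; [split; [intros; reflexivity| split]|].
    + intros i. destruct i.
    + intros t [[u Hu] _]. destruct u as [e|]; [destruct e| destruct Hu].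
    + intros c; discriminate.
  - intros s t [Fs [Rs Ls]] [Ft [Rt Lt]].
    set (g := Fs None).
    set (beta := fun o : option C => match o with Some a => g a | None => None end).
    assert (Hinj : forall a b, beta a = beta b -> a = b).
    { intros [a|] [b|]; simpl; intro E; auto.
      - destruct (g a) as [v|] eqn:Ea.
        + f_equal. exact (run_inj qt surj s Fs Rs None a b v Ea (eq_sym E)).
        + exfalso; exact (Ls a Ea).
      - exfalso; exact (Ls a E).
      - exfalso; exact (Ls b (eq_sym E)). }
    pose (G := fun u : stage (bs_idx (concat_seq s t)) =>
      match u with
      | Some (inl x) => Fs (Some x)
      | Some (inr y) => fun c => beta (Ft (Some y) c)
      | None => fun c => beta (Ft None c)
      end).
    exists G.
    pose (SL := fun t0 : stage (bs_idx (concat_seq s t)) =>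
      (forall k, is_succ (Some k) t0 -> forall d,
          G t0 (act_twist qt (bs_tw (concat_seq s t) k) d) = G (Some k) d) /\
      (is_limit t0 -> forall c, (forall w, eventually_const G t0 c w -> G t0 c = w) /\
          ((~ exists w, eventually_const G t0 c w) -> G t0 c = None))).
    destruct Rs as [Rs0 [Rss Rsl]]. destruct Rt as [Rt0 [Rts Rtl]].
    assert (case1 : forall x, SL (Some (inl x))).
    { intro x.
      refine (@transport L C C C qt (bs_idx s) (bs_idx (concat_seq s t)) (bs_tw s)
        (bs_tw (concat_seq s t)) (fun i => inl i)
        (fun u => match u with Some i => Some (inl i) | None => None end)
        Fs G (fun o => o) (Some x) _ _ _ _ _ _ _ _ _).
      - reflexivity.
      - intros u v Hu Hv.
        destruct u as [a|]; [|destruct Hu as [Hu|Hu]; [discriminate|destruct Hu]].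
        destruct v as [b|]; [|destruct Hv as [Hv|Hv]; [discriminate|destruct Hv]].
        simpl; tauto.
      - intros w Hw. left. destruct w as [[z|z]|]; simpl in Hw.
        + exists (Some z); split; [exact Hw|reflexivity].
        + destruct Hw.
        + destruct Hw.
      - reflexivity.
      - intros u Hu c. destruct u as [a|]; [reflexivity|].
        destruct Hu as [Hu|Hu]; [discriminate|destruct Hu].
      - auto.
      - reflexivity.
      - intros i; apply Rss.
      - apply Rsl. }
    assert (case2 : forall tK : stage (bs_idx (concat_seq s t)),
      (forall w, stage_lt w tK -> exists x : bs_idx s, w = Some (inl x)) ->
      (forall x : bs_idx s, stage_lt (Some (inl x) : stage (bs_idx (concat_seq s t))) tK) ->
      (forall c, G tK c = Fs None c) -> SL tK).
    { intros tK Hbelow Habove HG.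
      refine (@transport L C C C qt (bs_idx s) (bs_idx (concat_seq s t)) (bs_tw s)
        (bs_tw (concat_seq s t)) (fun i => inl i)
        (fun u => match u with Some i => Some (inl i) | None => tK end)
        Fs G (fun o => o) None _ _ _ _ _ _ _ _ _).
      - reflexivity.
      - intros u v _ _. destruct u as [a|], v as [b|]; simpl.
        + tauto.
        + split; [intros _; apply Habove| intros _; exact I].
        + split; [contradiction|intro h; exact (slt_irrefl _ (slt_trans h (Habove b)))].
        + split; [contradiction|intro h; exact (slt_irrefl _ h)].
      - intros w Hw. left. destruct (Hbelow w Hw) as [x ->].
        exists (Some x); split; [exact I|reflexivity].
      - reflexivity.
      - intros u Hu c. destruct u as [a|]; [reflexivity|]. apply HG.
      - auto.
      - reflexivity.
      - intros i; apply Rss.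
      - apply Rsl. }
    assert (case3 : forall t', (exists y1, stage_lt (Some y1) t') ->
      SL (match t' with Some j => Some (inr j) | None => None end)).
    { intros t' [y1 Hy1].
      refine (@transport L C C C qt (bs_idx t) (bs_idx (concat_seq s t)) (bs_tw t)
        (bs_tw (concat_seq s t)) (fun i => inr i)
        (fun u => match u with Some i => Some (inr i) | None => None end)
        Ft G beta t' _ _ _ _ _ _ _ _ _).
      - reflexivity.
      - intros u v _ _. destruct u, v; simpl; tauto.
      - intros w Hw. destruct w as [[x|z]|].
        + right. split; [exists (Some y1); exact Hy1|].
          intros u Hu. destruct u as [b|]; exact I.
        + left. exists (Some z). split; [|reflexivity].
          destruct t' as [b|]; simpl in Hw |- *; [exact Hw| exact I].
        + destruct t'; simpl in Hw; destruct Hw.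
      - reflexivity.
      - intros u Hu c. destruct u; reflexivity.
      - exact Hinj.
      - reflexivity.
      - intros i; apply Rts.
      - apply Rtl. }
    assert (HSL : forall t0, SL t0).
    { intros [[x|y]|].
      - apply case1.
      - destruct (classic (exists z, wo_lt (bs_idx t) z y)) as [[z Hz]|Hn].
        + exact (case3 (Some y) (ex_intro _ z Hz)).
        + apply case2.
          * intros [[x|z]|] Hw; [exists x; reflexivity| |destruct Hw].
            exfalso; apply Hn; exists z; exact Hw.
          * intros x; exact I.
          * intros c. simpl.
            rewrite (Rt0 (Some y)); [reflexivity|].
            intros [z|] Hz; [apply Hn; exists z; exact Hz| destruct Hz].
      - destruct (classic (exists y : bs_idx t, True)) as [[y _]|Hn].
        + exact (case3 None (ex_intro _ y I)).
        + apply case2.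
          * intros [[x|z]|] Hw; [exists x; reflexivity| |destruct Hw].
            exfalso; apply Hn; exists z; exact I.
          * intros x; exact I.
          * intros c. simpl.
            rewrite (Rt0 None); [reflexivity|].
            intros [z|] Hz; [apply Hn; exists z; exact I| destruct Hz]. }
    split; [split; [|split]|].
    + intros u Hu. destruct u as [[x|y]|].
      * apply Rs0. intros [z|] Hz; [exact (Hu (Some (inl z)) Hz)| exact Hz].
      * simpl. rewrite (Rt0 (Some y)).
        -- simpl. unfold g. rewrite Rs0; [reflexivity|].
           intros [z|] Hz; [exact (Hu (Some (inl z)) I)| exact Hz].
        -- intros [z|] Hz; [exact (Hu (Some (inr z)) Hz)| exact Hz].
      * simpl. rewrite (Rt0 None).
        -- simpl. unfold g. rewrite Rs0; [reflexivity|].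
           intros [z|] Hz; [exact (Hu (Some (inl z)) I)| exact Hz].
        -- intros [z|] Hz; [exact (Hu (Some (inr z)) I)| exact Hz].
    + intros i t0 Hi d. exact (proj1 (HSL t0) i Hi d).
    + intros t0 Hl c. exact (proj2 (HSL t0) Hl c).
    + intros c. simpl. destruct (Ft None c) as [a|] eqn:E; [exact (Ls a)| intros _; exact (Lt c E)].
Qed.

Lemma lbneg_inv {L} (v : Lbar L) : lbneg (lbneg v) = v.
Proof. destruct v as [[r| |r]| |]; reflexivity. Qed.

Lemma coord_rot {L} i (p : point L) : coord (rot_pt i p) i = coord p i.
Proof. destruct p as [[x y] z]; destruct i; reflexivity. Qed.

Lemma at_layer_rot {L} i (a : Lbar L) p : at_layer i a (rot_pt i p) = at_layer i a p.
Proof. unfold at_layer; rewrite coord_rot; reflexivity. Qed.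

Lemma rot4 {L} i (p : point L) : rot_pt i (rot_pt i (rot_pt i (rot_pt i p))) = p.
Proof. destruct p as [[x y] z]; destruct i; simpl; rewrite ?lbneg_inv; reflexivity. Qed.

Lemma rot_axis2 i j : rot_axis i (rot_axis i j) = j.
Proof. destruct i, j; reflexivity. Qed.

Lemma qturn4 {L} i (a : Lbar L) p :
  qturn_pt i a (qturn_pt i a (qturn_pt i a (qturn_pt i a p))) = p.
Proof.
  destruct (at_layer i a p) eqn:E.
  - assert (E1 : at_layer i a (rot_pt i p) = true) by (rewrite at_layer_rot; exact E).
    assert (E2 : at_layer i a (rot_pt i (rot_pt i p)) = true) by (rewrite at_layer_rot; exact E1).
    assert (E3 : at_layer i a (rot_pt i (rot_pt i (rot_pt i p))) = true) by (rewrite at_layer_rot; exact E2).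
    unfold qturn_pt. rewrite E, E1, E2, E3. apply rot4.
  - unfold qturn_pt. rewrite E, E, E, E. reflexivity.
Qed.

Lemma qturn4d {L} i (a : Lbar L) c :
  qturn_dpt i a (qturn_dpt i a (qturn_dpt i a (qturn_dpt i a c))) = c.
Proof.
  destruct c as [p j]. unfold qturn_dpt; simpl.
  destruct (at_layer i a p) eqn:E.
  - assert (E1 : at_layer i a (rot_pt i p) = true) by (rewrite at_layer_rot; exact E).
    assert (E2 : at_layer i a (rot_pt i (rot_pt i p)) = true) by (rewrite at_layer_rot; exact E1).
    assert (E3 : at_layer i a (rot_pt i (rot_pt i (rot_pt i p))) = true) by (rewrite at_layer_rot; exact E2).
    simpl. rewrite E1; simpl. rewrite E2; simpl. rewrite E3; simpl.
    rewrite rot4, !rot_axis2. reflexivity.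
  - simpl. rewrite E; simpl. rewrite E; simpl. rewrite E. reflexivity.
Qed.

Lemma sig_bool_eq {T} (P : T -> bool) (x y : {a | P a = true}) :
  proj1_sig x = proj1_sig y -> x = y.
Proof. destruct x as [a Ha], y as [b Hb]; simpl; intros ->. f_equal. apply UIP_dec, bool_dec. Qed.

Theorem corollary3p4 (L : Type) (HL : infinite_type L) :
  uc_submonoid (@qturn_ecell L) /\ uc_submonoid (@qturn_dcell L).
Proof.
  split; apply uc_generic; intros i a c.
  - exists (qturn_ecell i a (qturn_ecell i a (qturn_ecell i a c))).
    apply (sig_bool_eq edgeless_cellb). simpl. apply qturn4.
  - exists (qturn_dcell i a (qturn_dcell i a (qturn_dcell i a c))).
    apply (sig_bool_eq (fun c => is_inf (coord (fst c) (snd c)))). simpl. apply qturn4d.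
Qed.
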